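(* Let $V$ be a $2n$-dimensional complex vector space with a full flag $V_\bullet$, and let $\omega$ be a nondegenerate skew-symmetric bilinear form on $V$. Then there exists a basis $\{e_1,\dots,e_{2n}\}$ of $V$ which is compatible with the flag $V_\bullet$ and hyperbolic with respect to $\omega$.
   Context: A full flag $V_\bullet$ in $V$ is a chain of subspaces $0\subset V_1\subset\dots\subset V_{2n}=V$ with $\dim V_i=i$. A basis of $V$ is compatible with the flag $V_\bullet$ if every $V_i$ is spanned by some subset of the basis. A basis $\{e_1,\dots,e_N\}$ is hyperbolic with respect to a skew-symmetric form $\omega$ if for every $i$ either $\omega(e_i,\cdot)\equiv 0$, or there is exactly one index $j$ with $\omega(e_i,e_j)\neq 0$, and for that $j$ one has $\omega(e_i,e_j)=\pm1$. *)

(* Defs.v *)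
(* V = 'rV[algC]_(2n) (row vectors), subspaces are row
   spaces of matrices (mxalgebra), the bilinear form is given by its Gram
   matrix W : omega u v = (u *m W *m v^T) 0 0. *)
From HB Require Import structures.
From mathcomp Require Import all_boot all_order all_algebra all_field.
Set Implicit Arguments. Unset Strict Implicit. Unset Printing Implicit Defensive.
Import GRing.Theory Num.Theory.
Local Open Scope ring_scope.

Definition bform (N : nat) (W : 'M[algC]_N) (u v : 'rV[algC]_N) : algC :=
  (u *m W *m v^T) 0 0.

Definition skew_gram (N : nat) (W : 'M[algC]_N) : Prop := W^T = - W.

Definition nondeg_gram (N : nat) (W : 'M[algC]_N) : Prop := W \in unitmx.

Definition full_flag (N : nat) (Vf : nat -> 'M[algC]_N) : Prop :=
  (forall i, (i <= N)%N -> \rank (Vf i) = i) /\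
  (forall i, (i < N)%N -> (Vf i <= Vf i.+1)%MS).

Definition basis_rows (N : nat) (e : 'I_N -> 'rV[algC]_N) : Prop :=
  row_free (\matrix_(i < N) e i) /\ row_full (\matrix_(i < N) e i).

Definition flag_compatible (N : nat) (Vf : nat -> 'M[algC]_N)
    (e : 'I_N -> 'rV[algC]_N) : Prop :=
  forall i, (i <= N)%N ->
    exists S : {set 'I_N}, (Vf i == \sum_(j in S) <<e j>>)%MS.

Definition hyperbolic_basis (N : nat) (W : 'M[algC]_N)
    (e : 'I_N -> 'rV[algC]_N) : Prop :=
  forall i : 'I_N,
    (forall j, bform W (e i) (e j) = 0) \/
    (exists j : 'I_N,
        (bform W (e i) (e j) = 1 \/ bform W (e i) (e j) = -1) /\
        forall k : 'I_N, k != j -> bform W (e i) (e k) = 0).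

(* Main.v *)
Require Import Defs.
From HB Require Import structures.
From mathcomp Require Import all_boot all_order all_algebra all_field.
Set Implicit Arguments. Unset Strict Implicit. Unset Printing Implicit Defensive.
Import GRing.Theory Num.Theory.
Local Open Scope ring_scope.

Local Open Scope nat_scope.
Definition pp (j1 k : nat) := if k < j1 then k.+1 else k.+2.
Definition qq (j1 i : nat) := if i < j1.+1 then i.-1 else i.-2.
Lemma p_ne0 j1 k : pp j1 k != 0. Proof. by rewrite /pp; case: ifP. Qed.
Lemma p_nej j1 k : pp j1 k != j1.+1.
Proof. rewrite /pp; case: (ltnP k j1) => h; rewrite eqSS. by rewrite ltn_eqF. by rewrite gtn_eqF. Qed.
Lemma qp j1 k : qq j1 (pp j1 k) = k.
Proof. rewrite /pp /qq; case: (ltnP k j1) => h; first by rewrite ltnS h.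
by rewrite !ltnS ltnNge (leqW h). Qed.
Lemma pq j1 i : i != 0 -> i != j1.+1 -> pp j1 (qq j1 i) = i.
Proof.
move=> i0 ij; rewrite /qq /pp; case: (ltnP i j1.+1) => h.
  case: i i0 ij h => [|i] //= _ _ h.
  by rewrite ltnS in h; rewrite h.
have h2 : j1.+1 < i by rewrite ltn_neqAle eq_sym ij h.
case: i i0 ij h h2 => [|[|i]] //= _ _ _ h2.
by rewrite !ltnS in h2; rewrite ltnNge h2.
Qed.
Lemma p_mono j1 l k : l < k -> pp j1 l < pp j1 k.
Proof.
rewrite /pp => lk; case: (ltnP l j1) => h1; case: (ltnP k j1) => h2;
  rewrite ?ltnS //; try exact: ltnW.
by move: (leq_trans (leq_trans h2 h1) (ltnW lk)); rewrite ltnn.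
Qed.
Lemma p_le j1 k : pp j1 k <= k.+2.
Proof. by rewrite /pp; case: ifP => // _; rewrite leqW. Qed.
Lemma p_lt j1 k m : k < m.-2 -> pp j1 k < m.
Proof.
move=> h; apply: leq_ltn_trans (p_le j1 k) _.
case: m h => [|[|m]] //.
Qed.
Lemma q_lt j1 i m : i < m -> i != 0 -> i != j1.+1 -> j1.+1 < m -> qq j1 i < m.-2.
Proof.
move=> im i0 ij jm; rewrite /qq; case: (ltnP i j1.+1) => h.
  case: i im i0 ij h => [|i] //= im _ _ h.
  case: m im jm => [|[|m]] //=; rewrite !ltnS => im jm.
  by apply: leq_trans jm; rewrite -ltnS.
have h2 : j1.+1 < i by rewrite ltn_neqAle eq_sym ij h.
case: i im i0 ij h h2 => [|[|i]] //= im _ _ _ _; clear jm.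
by case: m im => [|[|m]].
Qed.

Local Open Scope ring_scope.

Section Sp.
Variable N : nat.
Variable W : 'M[algC]_N.
Hypothesis skW : W^T = - W.

Local Notation om := (bform W).

Lemma omC x y : om x y = - om y x.
Proof.
rewrite /bform.
have -> : (x *m W *m y^T) 0 0 = ((x *m W *m y^T)^T) 0 0 by rewrite [RHS]mxE.
by rewrite !trmx_mul trmxK skW mulmxA mulmxN mulNmx mxE.
Qed.

Lemma omxx x : om x x = 0.
Proof.
have h := omC x x.
have : om x x *+ 2 = 0 by rewrite mulr2n {1}h addNr.
by move/eqP; rewrite mulrn_eq0 /= => /eqP.
Qed.

Lemma omDl x y z : om (x + y) z = om x z + om y z.
Proof. by rewrite /bform !mulmxDl mxE. Qed.
Lemma omZl a x z : om (a *: x) z = a * om x z.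
Proof. by rewrite /bform -!scalemxAl mxE. Qed.
Lemma omNl x z : om (- x) z = - om x z.
Proof. by rewrite -scaleN1r omZl mulN1r. Qed.
Lemma omBl x y z : om (x - y) z = om x z - om y z.
Proof. by rewrite omDl omNl. Qed.
Lemma omDr x y z : om x (y + z) = om x y + om x z.
Proof. by rewrite omC omDl opprD -!omC. Qed.
Lemma omZr a x z : om x (a *: z) = a * om x z.
Proof. by rewrite omC omZl -mulrN -omC. Qed.
Lemma omBr x y z : om x (y - z) = om x y - om x z.
Proof. by rewrite omDr -scaleN1r omZr mulN1r. Qed.

Definition spn (h : nat -> 'rV[algC]_N) k := (\sum_(i < k) <<h i>>)%MS.

Lemma spn_gen h k i : (i < k)%N -> (h i <= spn h k)%MS.
Proof.
move=> lt; rewrite /spn -(genmxE (h i)).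
exact: (sumsmx_sup (Ordinal lt)).
Qed.

Lemma spn_subP h k m (A : 'M_(m, N)) :
  (forall i, (i < k)%N -> (h i <= A)%MS) -> (spn h k <= A)%MS.
Proof.
move=> H; apply/sumsmx_subP => i _; rewrite genmxE; exact: H.
Qed.

Lemma spn_mono h k r : (k <= r)%N -> (spn h k <= spn h r)%MS.
Proof.
move=> le; apply: spn_subP => i ik; apply: spn_gen; exact: leq_trans ik le.
Qed.

Lemma om_span0 h k x v : (forall l, (l < k)%N -> om (h l) x = 0) ->
  (v <= spn h k)%MS -> om v x = 0.
Proof.
move=> H Hv.
have : (spn h k <= kermx (W *m x^T))%MS.
  apply: spn_subP => l lk; apply/sub_kermxP.
  apply/matrixP => a b; rewrite !ord1 mulmxA -[_ 0 0]/(om (h l) x) H //.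
  by rewrite mxE.
move=> /(submx_trans Hv) /sub_kermxP.
by rewrite /bform -mulmxA => ->; rewrite mxE.
Qed.

Lemma rank_spn h m : (forall k, (k < m)%N -> ~~ (h k <= spn h k)%MS) ->
  (m <= \rank (spn h m))%N.
Proof.
elim: m => [|m IH] H //.
have IHm := IH (fun k kl => H k (ltnW kl)).
have Hm := H m (ltnSn m).
have -> : spn h m.+1 = (spn h m + <<h m>>)%MS by rewrite /spn big_ord_recr.
apply: leq_ltn_trans IHm (rank_ltmx _).
rewrite ltmxE addsmxSl /=; apply: contra Hm => Hs.
apply: submx_trans Hs; rewrite -{1}(genmxE (h m)); exact: addsmxSr.
Qed.


Definition pairing (m : nat) (e : nat -> 'rV[algC]_N) (s : nat -> nat) (f : nat -> 'rV[algC]_N) :=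
  forall i, (i < m)%N -> [/\ (e i <= spn f i.+1)%MS, (s i < m)%N,
     om (e i) (e (s i)) = 1 \/ om (e i) (e (s i)) = -1 &
     forall k, (k < m)%N -> k != s i -> om (e i) (e k) = 0].

Lemma G M : forall m f, (m <= M)%N ->
  (forall k, (k < m)%N -> ~~ (f k <= spn f k)%MS) ->
  (forall v, (v <= spn f m)%MS -> v != 0 -> exists2 i, (i < m)%N & om v (f i) != 0) ->
  exists e s, pairing m e s f.
Proof.
elim: M => [|M IH] m f le H1 H2.
  move: le; rewrite leqn0 => /eqP ->. by exists (fun=> 0), (fun=> 0%N).
case: (posnP m) => [->|m0]; first by exists (fun=> 0), (fun=> 0%N).
set f0 := f 0%N.
have f0n : f0 != 0.
  apply/negP => /eqP e0. have := H1 0%N m0. by rewrite -/f0 e0 sub0mx.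
have [i im ni] := H2 f0 (spn_gen f m0) f0n.
have exj : exists j, (j < m)%N && (om f0 (f j) != 0) by exists i; rewrite im ni.
case: (ex_minnP exj) => j /andP[jm cj] jmin.
have j0 : j != 0%N by apply: contraNneq cj => ->; rewrite omxx.
have jlt q : (q < j)%N -> om (f q) f0 = 0.
  move=> qj; rewrite omC; apply/eqP; rewrite oppr_eq0.
  case: eqP => // /eqP nz.
  by have := jmin q; rewrite nz (ltn_trans qj jm) leqNgt qj => /(_ isT).
have [j1 ej] : exists j1, j = j1.+1 by exists j.-1; rewrite prednK // lt0n.
subst j.
set c := om f0 (f j1.+1).
set w := c^-1 *: f j1.+1.
have f0w : om f0 w = 1 by rewrite /w omZr mulVf.
have wf0 : om w f0 = -1 by rewrite omC f0w.
have fj : f j1.+1 = c *: w by rewrite /w scalerA mulfV // scale1r.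
have wsub r : (j1.+1 < r)%N -> (w <= spn f r)%MS.
  by move=> h; apply: scalemx_sub; exact: spn_gen.
clearbody w.
pose g q := f q - om (f q) w *: f0 + om (f q) f0 *: w.
have gf0 q : om (g q) f0 = 0.
  by rewrite /g omDl omBl !omZl omxx wf0 mulr0 subr0 mulrN1 subrr.
have gw q : om (g q) w = 0.
  by rewrite /g omDl omBl !omZl omxx f0w mulr0 addr0 mulr1 subrr.
have cond q r : q != j1.+1 -> (q <= r)%N -> ((j1.+1 < r)%N \/ om (f q) f0 = 0).
  move=> qj qr; case: (ltngtP q j1.+1) => h.
  - by right; apply: jlt.
  - by left; apply: leq_trans h qr.
  - by rewrite h eqxx in qj.
have gsub q r : (q < r)%N -> (0 < r)%N -> ((j1.+1 < r)%N \/ om (f q) f0 = 0) ->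
    (g q <= spn f r)%MS.
  move=> qr r0 cnd; rewrite /g; apply: addmx_sub; first apply: addmx_sub.
  - exact: spn_gen.
  - rewrite eqmx_opp; apply: scalemx_sub; exact: spn_gen.
  - case: cnd => [jr|->]; last by rewrite scale0r sub0mx.
    apply: scalemx_sub; exact: wsub.
have fsub q r : (g q <= spn f r)%MS -> (0 < r)%N ->
    ((j1.+1 < r)%N \/ om (f q) f0 = 0) -> (f q <= spn f r)%MS.
  move=> gs r0 cnd.
  have -> : f q = g q - om (f q) f0 *: w + om (f q) w *: f0 by rewrite /g addrK subrK.
  apply: addmx_sub; first apply: addmx_sub.
  - exact: gs.
  - rewrite eqmx_opp; case: cnd => [jr|->]; last by rewrite scale0r sub0mx.
    apply: scalemx_sub; exact: wsub.
  - apply: scalemx_sub; exact: spn_gen.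
pose f' k := g (pp j1 k).
have spnsub k r : (forall l, (l < k)%N -> (pp j1 l < r)%N) -> (0 < r)%N ->
    (spn f' k <= spn f r)%MS.
  move=> H r0; apply: spn_subP => l lk.
  exact: gsub (H l lk) r0 (cond _ _ (p_nej j1 l) (ltnW (H l lk))).
have le' : (m.-2 <= M)%N.
  by move: le; case: (m) => [|[|m2]] //=; rewrite ltnS => /ltnW.
have H1' : forall k, (k < m.-2)%N -> ~~ (f' k <= spn f' k)%MS.
  move=> k km; apply/negP => Hs; move: (H1 _ (p_lt j1 km)) => /negP; apply.
  have pk0 : (0 < pp j1 k)%N by rewrite lt0n p_ne0.
  apply: (fsub _ _ _ pk0 (cond _ _ (p_nej j1 k) (leqnn _))).
  apply: (submx_trans Hs (spnsub _ _ _ pk0)) => l lk; exact: p_mono.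
have H2' : forall v, (v <= spn f' m.-2)%MS -> v != 0 ->
    exists2 i, (i < m.-2)%N & om v (f' i) != 0.
  move=> v Hv vn.
  have Hv' : (v <= spn f m)%MS.
    exact: submx_trans Hv (spnsub _ _ (fun l lk => p_lt j1 lk) m0).
  have [i' i'm ni'] := H2 v Hv' vn.
  have v0 : om v f0 = 0 := om_span0 (fun l _ => gf0 (pp j1 l)) Hv.
  have vw : om v w = 0 := om_span0 (fun l _ => gw (pp j1 l)) Hv.
  have i0 : i' != 0%N by apply: contraNneq ni' => ->; rewrite v0.
  have ij : i' != j1.+1 by apply: contraNneq ni' => ->; rewrite fj omZr vw mulr0.
  exists (qq j1 i'); first exact: q_lt.
  by rewrite /f' (pq i0 ij) /g omDr omBr !omZr v0 vw !mulr0 subr0 addr0.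
have [e' [s' P']] := IH _ f' le' H1' H2'.
have e'sub l : (l < m.-2)%N -> (e' l <= spn f' m.-2)%MS.
  by move=> lt; case: (P' l lt) => h _ _ _; apply: (submx_trans h (spn_mono _ lt)).
have e'f0 l : (l < m.-2)%N -> om (e' l) f0 = 0.
  by move=> lt; apply: (om_span0 (fun l _ => gf0 (pp j1 l)) (e'sub l lt)).
have e'w l : (l < m.-2)%N -> om (e' l) w = 0.
  by move=> lt; apply: (om_span0 (fun l _ => gw (pp j1 l)) (e'sub l lt)).
have jm2 : (j1.+1 < m)%N by [].
exists (fun i => if i == 0%N then f0 else if i == j1.+1 then w else e' (qq j1 i)).
exists (fun i => if i == 0%N then j1.+1 else if i == j1.+1 then 0%N else pp j1 (s' (qq j1 i))).
have ep k : (if pp j1 k == 0%N then f0 else if pp j1 k == j1.+1 then w else e' (qq j1 (pp j1 k))) = e' k.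
  by rewrite (negbTE (p_ne0 _ _)) (negbTE (p_nej _ _)) qp.
move=> ii iim; case: eqP => [->|ii0].
  rewrite /=  eqxx; split => //.
  - exact: spn_gen.
  - by left.
  - move=> k km kj; case: (k =P 0%N) => [_|/eqP k0]; first by rewrite omxx.
    rewrite (negbTE kj) omC e'f0 ?oppr0 //.
    by apply: q_lt => //; apply/eqP.
case: eqP => [->|iij].
  rewrite /=; split => //.
  - exact: wsub.
  - by right.
  - move=> k km kj; rewrite (negbTE kj).
    case: (k =P j1.+1) => [_|/eqP k0]; first by rewrite omxx.
    rewrite omC e'w ?oppr0 //.
    by apply: q_lt => //; apply/eqP.
have li : (qq j1 ii < m.-2)%N by apply: q_lt => //; apply/eqP.
case: (P' _ li) => Hsub Hs Hval Hz.
rewrite ep; split.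
- apply: (submx_trans Hsub); apply: spnsub => // l.
  move/eqP: ii0 => ii0; move/eqP: iij => iij.
  rewrite ltnS leq_eqVlt => /orP[/eqP->|lq]; rewrite ltnS.
    by rewrite pq.
  by rewrite -(pq ii0 iij); apply: ltnW (p_mono j1 lq).
- exact: p_lt.
- exact: Hval.
- move=> k km kj.
  case: (k =P 0%N) => [_|/eqP k0]; first exact: e'f0.
  case: (k =P j1.+1) => [_|/eqP kj1]; first exact: e'w.
  apply: Hz; first exact: q_lt.
  by apply: contra kj => /eqP <-; rewrite pq.
Qed.

Lemma main_gen (Vf : nat -> 'M[algC]_N) : full_flag Vf -> nondeg_gram W ->
  exists e : 'I_N -> 'rV[algC]_N,
    basis_rows e /\ flag_compatible Vf e /\ hyperbolic_basis W e.
Proof.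
move=> [rk mono] nd.
have mono' l k : (l <= k)%N -> (k <= N)%N -> (Vf l <= Vf k)%MS.
  elim: k => [|k IHk] lk kN; first by move: lk; rewrite leqn0 => /eqP ->.
  move: lk; rewrite leq_eqVlt => /orP[/eqP->//|]; rewrite ltnS => lk.
  exact: submx_trans (IHk lk (ltnW kN)) (mono k kN).
have exP k : exists x : 'rV[algC]_N,
    (k < N)%N ==> ((x <= Vf k.+1)%MS && ~~ (x <= Vf k)%MS).
  case: (ltnP k N) => kN; last by exists 0.
  have : ~~ (Vf k.+1 <= Vf k)%MS.
    apply/negP => /mxrankS; by rewrite rk // rk ?(ltnW kN) // ltnn.
  move/row_subPn => [r nr]; exists (row r (Vf k.+1)); by rewrite row_sub.
pose f k := xchoose (exP k).
have fP k : (k < N)%N -> (f k <= Vf k.+1)%MS && ~~ (f k <= Vf k)%MS.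
  by move=> kN; move/implyP: (xchooseP (exP k)); apply.
have spnV k : (k <= N)%N -> (spn f k <= Vf k)%MS.
  move=> kN; apply: spn_subP => l lk.
  have lN : (l < N)%N := leq_trans lk kN.
  by case/andP: (fP l lN) => h _; apply: submx_trans h (mono' _ _ lk kN).
have H1 : forall k, (k < N)%N -> ~~ (f k <= spn f k)%MS.
  move=> k kN; case/andP: (fP k kN) => _; apply: contra => h.
  exact: submx_trans h (spnV k (ltnW kN)).
have full : row_full (spn f N).
  by rewrite /row_full eqn_leq rank_leq_col rank_spn.
have H2 : forall v, (v <= spn f N)%MS -> v != 0 ->
    exists2 i, (i < N)%N & om v (f i) != 0.
  move=> v _ vn.
  case: (boolP [exists i : 'I_N, om v (f i) != 0]) => [/existsP[i ni]|].
    by exists i.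
  rewrite negb_exists => /forallP all0.
  have vx x : om v x = 0.
    rewrite omC; apply/eqP; rewrite oppr_eq0; apply/eqP.
    apply: (om_span0 _ (submx_full x full)) => l lN.
    have := all0 (Ordinal lN); rewrite negbK => /eqP /= h; by rewrite omC h oppr0.
  have vW : v *m W = 0.
    apply/rowP => r; have := vx (delta_mx 0 r).
    by rewrite /bform trmx_delta -colE !mxE => ->.
  by move: vn; rewrite -(mulmxK nd v) vW mul0mx eqxx.
have [e [s P]] := G (leqnn N) H1 H2.
have ss i : (i < N)%N -> s (s i) = i.
  move=> iN; case: (P i iN) => _ siN Hv _.
  case: (P (s i) siN) => _ _ _ Hz.
  have nz : om (e (s i)) (e i) != 0.
    rewrite omC oppr_eq0; case: Hv => ->; by rewrite ?oppr_eq0 oner_eq0.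
  apply/eqP; apply: contraNT nz => ne; rewrite eq_sym in ne.
  by rewrite Hz.
have He k : (k < N)%N -> ~~ (e k <= spn e k)%MS.
  move=> kN; case: (P k kN) => _ skN Hv _; apply/negP => Hs.
  have : om (e k) (e (s k)) = 0.
    apply: (om_span0 _ Hs) => l lk.
    have lN : (l < N)%N := ltn_trans lk kN.
    case: (P l lN) => _ _ _ Hz; apply: Hz => //.
    apply/eqP => sls; move: lk; by rewrite -(ss k kN) sls (ss l lN) ltnn.
  by case: Hv => -> /eqP; rewrite ?oppr_eq0 oner_eq0.
have rke k : (k <= N)%N -> (k <= \rank (spn e k))%N.
  move=> kN; apply: rank_spn => l lk; apply: He; exact: leq_trans lk kN.
exists (fun i => e i); split; [|split].
- have sub : (spn e N <= \matrix_(i < N) e i)%MS.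
    apply: spn_subP => l lN.
    by rewrite -[e l]/((fun i : 'I_N => e i) (Ordinal lN)) -rowK row_sub.
  have rkN : \rank (\matrix_(i < N) e i) = N.
    apply/eqP; rewrite eqn_leq rank_leq_row /=.
    exact: leq_trans (rke N (leqnn N)) (mxrankS sub).
  by split; rewrite /row_free /row_full rkN.
- move=> i iN; exists [set j : 'I_N | (j < i)%N].
  set B := (\sum_(j in _) _)%MS.
  have BV : (B <= Vf i)%MS.
    apply/sumsmx_subP => j; rewrite inE genmxE => ji.
    case: (P j (ltn_ord j)) => h _ _ _.
    exact: submx_trans h (submx_trans (spnV _ (ltn_ord j)) (mono' _ _ ji iN)).
  have eB : (spn e i <= B)%MS.
    apply: spn_subP => l li.
    have lN : (l < N)%N := leq_trans li iN.
    apply: (sumsmx_sup (Ordinal lN)); first by rewrite inE.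
    by rewrite genmxE.
  apply/andP; split => //.
  have := mxrank_leqif_sup BV; rewrite rk // => [[_ <-]].
  rewrite eqn_leq -{1}(rk i iN) (mxrankS BV) /=.
  exact: leq_trans (rke i iN) (mxrankS eB).
- move=> i; right; case: (P i (ltn_ord i)) => _ siN Hv Hz.
  exists (Ordinal siN); split => // k kne.
  apply: Hz => //; apply: contra kne => /eqP ke; apply/eqP; exact: val_inj.
Qed.

End Sp.

Theorem lemma2 (n : nat) (Vf : nat -> 'M[algC]_(2 * n)) (W : 'M[algC]_(2 * n)) :
  full_flag Vf -> skew_gram W -> nondeg_gram W ->
  exists e : 'I_(2 * n) -> 'rV[algC]_(2 * n),
    basis_rows e /\ flag_compatible Vf e /\ hyperbolic_basis W e.
Proof. by move=> ff sk nd; apply: main_gen. Qed.
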